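(* Let $\beta:[r]\to[n]$ be injective and $R\in L_n(T_R(\beta))$. If there exist $m$, $L\in L_m(P_m)$ and an increasing $\alpha:[r]\to[m]$ such that $L\,\Pi(\alpha,\beta)=\Pi(\alpha,\beta)\,R$, then $R=I_n$.
   Context: $\mathbb{F}$ is the field with two elements, $[n]=\{1,\dots,n\}$, $e_{n,i}$ standard basis column vectors, $I_n$ identity. $P_n=\{(i,j):i,j\in[n],i>j\}$; for transitive $T\subseteq P_n$, $L_n(T)=I_n+\mathrm{span}_{\mathbb{F}}\{e_{n,i}e_{n,j}^{\top}:(i,j)\in T\}$. $\Pi(\alpha,\beta)=\sum_{i=1}^re_{m,\alpha(i)}e_{n,\beta(i)}^{\top}$. For injective $\beta$, $T_R(\beta)=\{(i,j):i\in\mathrm{Im}(\beta),j<i,j\notin\{\beta(1),\dots,\beta(\beta^{-1}(i)-1)\}\}$ (a transitive subset of $P_n$). *)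

(* Defs.v *)
(* Field F = 'F_2. Index sets [n] are rendered as 'I_n
   (0-based, order preserved: index k in 'I_n corresponds to k+1 in [n]). *)
From HB Require Import structures.
From mathcomp Require Import all_boot all_order all_algebra.
Set Implicit Arguments. Unset Strict Implicit. Unset Printing Implicit Defensive.
Import GRing.Theory.
Local Open Scope ring_scope.

Definition Pn (n : nat) : rel 'I_n := fun i j => (j < i)%N.

(* L_n(T) = I_n + span_F {e_i e_j^T : (i,j) in T}: a matrix A lies in it iff
   A - I_n is supported on T, i.e. off T its entries are those of I_n. *)
Definition inL (n : nat) (T : rel 'I_n) (A : 'M['F_2]_n) : Prop :=
  forall i j : 'I_n, ~~ T i j -> A i j = (i == j)%:R.

Definition Pi (r m n : nat) (alpha : 'I_r -> 'I_m) (beta : 'I_r -> 'I_n)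
  : 'M['F_2]_(m, n) := \sum_(i < r) delta_mx (alpha i) (beta i).

Definition TR (r n : nat) (beta : 'I_r -> 'I_n) : rel 'I_n :=
  fun i j => [exists k : 'I_r, (beta k == i) && (j < i)%N &&
               [forall k' : 'I_r, (k' < k)%N ==> (beta k' != j)]].

(* Main.v *)
Require Import Defs.
From HB Require Import structures.
From mathcomp Require Import all_boot all_order all_algebra.
Local Open Scope ring_scope.
Import GRing.Theory.

Theorem lemma5 (r n : nat) (beta : 'I_r -> 'I_n) (R : 'M['F_2]_n) :
  injective beta ->
  inL (TR beta) R ->
  (exists (m : nat) (L : 'M['F_2]_m) (alpha : 'I_r -> 'I_m),
      [/\ inL (@Pn m) L,
          {homo alpha : x y / (x < y)%N} &
          L *m Pi alpha beta = Pi alpha beta *m R]) ->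
  R = 1%:M.
Proof.
move=> _ HR [m [L [alpha [HL Ha HE]]]].
have PiE a b : Pi alpha beta a b =
    \sum_(k < r) ((alpha k == a) && (beta k == b))%:R.
  by rewrite /Pi summxE; apply: eq_bigr => k _; rewrite mxE (eq_sym a) (eq_sym b).
have ainj : injective alpha.
  move=> x y e; apply: val_inj => /=.
  case: (ltngtP x y) => // h.
  - by have := Ha _ _ h; rewrite e ltnn.
  - by have := Ha _ _ h; rewrite e ltnn.
have PiRow k a : Pi alpha beta (alpha k) a = (beta k == a)%:R.
  rewrite PiE (bigD1 k) //= eqxx /= big1 ?addr0 // => k' nk'.
  case: eqP => [/ainj e|] //=; by rewrite e eqxx in nk'.
apply/matrixP => i j; rewrite mxE.
case T: (TR beta i j); last by apply: HR; rewrite T.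
move: T => /existsP [k /andP [/andP [/eqP bk ji] /forallP Hk]].
have ij : (i == j) = false by apply/negbTE; rewrite neq_ltn ji orbT.
rewrite ij.
have := congr1 (fun M : 'M['F_2]_(m, n) => M (alpha k) j) HE; rewrite /= !mxE.
have -> : \sum_a Pi alpha beta (alpha k) a * R a j = R i j.
  rewrite (bigD1 (beta k)) //= PiRow eqxx mul1r big1 ?addr0 ?bk // => a na.
  by rewrite PiRow bk eq_sym (negbTE na) mul0r.
move=> <-; apply: big1 => a _; rewrite PiE mulr_sumr; apply: big1 => k' _.
case: eqP => [ea|]; last by rewrite mulr0.
case: eqP => [eb|]; last by rewrite mulr0.
rewrite -ea HL ?mulr1 //; last first.
  have kk' : (k < k')%N.
    rewrite ltn_neqAle; apply/andP; split.
      by apply/eqP => e; have := ji; rewrite -bk -eb (val_inj e) ltnn.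
    by have := Hk k'; rewrite eb eqxx implybF -leqNgt.
  by rewrite /Pn -leqNgt ltnW // Ha.
case: eqP => // /ainj e.
by have := ji; rewrite -bk -eb e ltnn.
Qed.
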